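(* The function $f(x)=\sum_{n\geq 0}\frac{1}{(n+1)^2}\sum_{i=0}^{2^n-1}\sigma_{n,i}(x)$ on $[0,1]$ is completely non-Hölder.
   Context: The Faber–Schauder functions: $\sigma_{0,0}(x)=0$ for $x\le 0$ or $x\ge 1$, $\sigma_{0,0}(x)=2x$ for $0\le x\le \frac12$, $\sigma_{0,0}(x)=2-2x$ for $\frac12\le x\le 1$; and for $n\ge 0$, $0\le i\le 2^n-1$, $\sigma_{n,i}(x)=\sigma_{0,0}(2^nx-i)$. For $\alpha>0$, a function $g:[0,1]\to\mathbb{R}$ is called $\alpha$-Hölder at $x_0$ from the right if $\limsup_{y\searrow x_0}\frac{|g(y)-g(x_0)|}{|y-x_0|^\alpha}<\infty$, and $\alpha$-Hölder at $x_0$ from the left if $\limsup_{y\nearrow x_0}\frac{|g(y)-g(x_0)|}{|y-x_0|^\alpha}<\infty$. The function $g$ is called completely non-Hölder if there is no $x_0\in[0,1]$ and no $\alpha>0$ such that $g$ is $\alpha$-Hölder at $x_0$ from the left or from the right. *)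

(* Defs.v *)
From Stdlib Require Import Reals.
From Coquelicot Require Import Coquelicot.
Open Scope R_scope.

Definition sigma00 (x : R) : R :=
  if Rle_dec x 0 then 0
  else if Rle_dec 1 x then 0
  else if Rle_dec x (1/2) then 2 * x
  else 2 - 2 * x.

Definition sigma (n i : nat) (x : R) : R := sigma00 (2 ^ n * x - INR i).

Definition f_term (x : R) (n : nat) : R :=
  / (INR n + 1) ^ 2 * sum_f_R0 (fun i => sigma n i x) (2 ^ n - 1)%nat.

Definition fFS (x : R) : R := Series (f_term x).

(* limsup_{y \searrow x0, y in [0,1]} |g y - g x0| / |y - x0|^alpha < +oo,
   unfolded: the ratio is eventually bounded above. *)
Definition holder_right (g : R -> R) (alpha x0 : R) : Prop :=
  exists M delta, 0 < delta /\
    forall y, x0 < y < x0 + delta -> y <= 1 ->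
      Rabs (g y - g x0) / Rpower (Rabs (y - x0)) alpha <= M.

Definition holder_left (g : R -> R) (alpha x0 : R) : Prop :=
  exists M delta, 0 < delta /\
    forall y, x0 - delta < y < x0 -> 0 <= y ->
      Rabs (g y - g x0) / Rpower (Rabs (y - x0)) alpha <= M.

(* One-sided Hölder conditions only make sense where the side exists inside
   [0,1]: from the right at x0 in [0,1), from the left at x0 in (0,1]. *)
Definition completely_non_Holder (g : R -> R) : Prop :=
  ~ exists x0 alpha, 0 < alpha /\
      ((0 <= x0 < 1 /\ holder_right g alpha x0) \/
       (0 < x0 <= 1 /\ holder_left g alpha x0)).

(* Main.v *)
Require Import Defs.
From Stdlib Require Import Reals Lra Lia ZArith.
From Coquelicot Require Import Coquelicot.
Open Scope R_scope.

Lemma s00_le0 s : s <= 0 -> sigma00 s = 0.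
Proof. intros; unfold sigma00; destruct (Rle_dec s 0); lra. Qed.
Lemma s00_ge1 s : 1 <= s -> sigma00 s = 0.
Proof. intros; unfold sigma00; destruct (Rle_dec s 0); [reflexivity|]; destruct (Rle_dec 1 s); lra. Qed.
Lemma s00_half : sigma00 (/2) = 1.
Proof. unfold sigma00; repeat destruct (Rle_dec _ _); lra. Qed.
Lemma s00_bounds s : 0 <= sigma00 s <= 1.
Proof. unfold sigma00; repeat destruct (Rle_dec _ _); lra. Qed.
Lemma s00_int z : sigma00 (IZR z) = 0.
Proof.
  destruct (Z_le_gt_dec z 0).
  - apply s00_le0; apply IZR_le in l; exact l.
  - apply s00_ge1; apply IZR_le; lia.
Qed.
Lemma s00_cell z s1 s3 : IZR z / 2 <= s1 -> s1 <= s3 -> s3 <= (IZR z + 1)/2 ->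
  sigma00 s1 + sigma00 s3 - 2 * sigma00 ((s1+s3)/2) = 0.
Proof.
  intros H1 H2 H3.
  destruct (Z_lt_le_dec z 0) as [Hz|Hz].
  - assert (IZR z <= -1) by (apply IZR_le; lia).
    rewrite !s00_le0; lra.
  - destruct (Z_le_gt_dec z 1) as [Hz'|Hz'].
    + assert (z = 0 \/ z = 1)%Z as [->| ->] by lia; simpl in *;
      unfold sigma00; repeat destruct (Rle_dec _ _); lra.
    + assert (IZR z >= 2) by (apply Rle_ge, IZR_le; lia).
      rewrite !s00_ge1; lra.
Qed.

Lemma sum_zero f N : (forall i, (i <= N)%nat -> f i = 0) -> sum_f_R0 f N = 0.
Proof.
  induction N; intros H. simpl; apply H; lia.
  rewrite tech5, IHN, H; [lra|lia|]. intros; apply H; lia.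
Qed.

Lemma sumA K t : INR K + 1 <= t -> sum_f_R0 (fun i => sigma00 (t - INR i)) K = 0.
Proof.
  intros H; apply sum_zero; intros i Hi; apply s00_ge1.
  apply le_INR in Hi; lra.
Qed.

Lemma sumB K t : 0 <= sum_f_R0 (fun i => sigma00 (t - INR i)) K <= 1.
Proof.
  induction K.
  - simpl; apply s00_bounds.
  - rewrite tech5. destruct (Rle_dec t (INR (S K))).
    + rewrite (s00_le0 (t - INR (S K))) by lra; lra.
    + rewrite S_INR in n. rewrite sumA by lra.
      pose proof (s00_bounds (t - INR (S K))); lra.
Qed.

Lemma f_term_bounds x n : 0 <= f_term x n <= / (INR n + 1) ^ 2.
Proof.
  unfold f_term, Defs.sigma.
  pose proof (sumB (2 ^ n - 1) (2 ^ n * x)).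
  assert (0 < / (INR n + 1) ^ 2).
  { apply Rinv_0_lt_compat, pow_lt. pose proof (pos_INR n); lra. }
  split. apply Rmult_le_pos. lra. lra.
  rewrite <- (Rmult_1_r (/ _)) at 2. apply Rmult_le_compat_l; lra.
Qed.

Lemma inv_sq_partial N : sum_f_R0 (fun n => / (INR n + 1) ^ 2) N <= 2 - / (INR N + 1).
Proof.
  induction N.
  - simpl. lra.
  - rewrite tech5. rewrite S_INR.
    assert (0 <= INR N) by apply pos_INR.
    assert (/ (INR N + 1 + 1) ^ 2 <= / (INR N + 1) - / (INR N + 1 + 1)).
    { replace (/ (INR N + 1) - / (INR N + 1 + 1)) with (/ ((INR N + 1) * (INR N + 1 + 1))) by (field; lra).
      apply Rinv_le_contravar. nra. nra. }
    lra.
Qed.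

Lemma ex_inv_sq : ex_series (fun n => / (INR n + 1) ^ 2).
Proof.
  apply ex_series_Reals_1. apply growing_cv.
  - intro n. rewrite tech5. assert (0 < / (INR (S n) + 1) ^ 2).
    { apply Rinv_0_lt_compat, pow_lt. pose proof (pos_INR (S n)); lra. } lra.
  - exists 2. intros y [N ->]. pose proof (inv_sq_partial N).
    assert (0 < / (INR N + 1)) by (apply Rinv_0_lt_compat; pose proof (pos_INR N); lra). lra.
Qed.

Lemma ex_f x : ex_series (f_term x).
Proof.
  apply (ex_series_le (K:=R_AbsRing) (V:=R_CompleteNormedModule)) with (b := fun n => / (INR n + 1) ^ 2).
  2: exact ex_inv_sq.
  intro n. pose proof (f_term_bounds x n). change norm with Rabs. 
  rewrite Rabs_pos_eq by lra. replace ((INR n + 1) * ((INR n + 1) * 1)) with ((INR n + 1) ^ 2) by ring. lra.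
Qed.

Lemma INR2 : INR 2 = 2. Proof. simpl; ring. Qed.

Lemma grid_zero j m n : (m <= n)%nat -> f_term (INR j / 2^m) n = 0.
Proof.
  intros Hmn. unfold f_term, Defs.sigma. rewrite sum_zero; [ring|]. intros i _.
  replace (2^n * (INR j/2^m) - INR i) with (IZR (Z.of_nat (j*2^(n-m)) - Z.of_nat i)).
  apply s00_int.
  rewrite minus_IZR, <- !INR_IZR_INZ, mult_INR, pow_INR, INR2.
  replace n with (m + (n-m))%nat at 2 by lia. rewrite pow_add. field.
  apply pow_nonzero; lra.
Qed.

Lemma half_sum K k : sum_f_R0 (fun i => sigma00 (INR k + /2 - INR i)) K
  = if (k <=? K)%nat then 1 else 0.
Proof.
  induction K.
  - simpl. destruct k.
    + simpl. replace (0 + /2 - 0) with (/2) by ring. apply s00_half.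
    + simpl Nat.leb. apply s00_ge1. pose proof (pos_INR k). rewrite S_INR. lra.
  - rewrite tech5, IHK.
    destruct (le_lt_dec k K) as [Hk|Hk].
    + rewrite (proj2 (Nat.leb_le k K) Hk), (proj2 (Nat.leb_le k (S K))) by lia.
      rewrite s00_le0. lra. apply le_INR in Hk. rewrite S_INR. lra.
    + rewrite (proj2 (Nat.leb_gt k K) Hk).
      destruct (Nat.eq_dec k (S K)) as [->|Hne].
      * rewrite (proj2 (Nat.leb_le (S K) (S K))) by lia.
        replace (INR (S K) + /2 - INR (S K)) with (/2) by ring. rewrite s00_half; lra.
      * rewrite (proj2 (Nat.leb_gt k (S K))) by lia.
        rewrite s00_ge1. lra. assert (S (S K) <= k)%nat by lia. apply le_INR in H. rewrite !S_INR in *. lra.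
Qed.

Lemma aux_div a b D : 0 < D -> a * D <= b -> a / 2 <= b / (2 * D).
Proof.
  intros HD H. replace (b / (2*D)) with (a/2 + (b - a*D)/(2*D)) by (field; lra).
  assert (0 <= (b - a*D)/(2*D)) by (apply Rdiv_le_0_compat; lra). lra.
Qed.

Lemma low_term n e k i :
  sigma00 (2^n*(INR k/2^(n + S e)) - INR i) + sigma00 (2^n*(INR (S k)/2^(n + S e)) - INR i)
  - 2*sigma00 (2^n*(INR (2*k+1)/2^(S (n + S e))) - INR i) = 0.
Proof.
  set (P := (k / 2^e)%nat).
  assert (He : (2^e <> 0)%nat) by (apply Nat.pow_nonzero; lia).
  assert (H1 : (2^e * P <= k)%nat) by (apply Nat.mul_div_le; auto).
  assert (H2 : (k + 1 <= 2^e * (P + 1))%nat).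
  { pose proof (Nat.div_mod k (2^e) He). pose proof (Nat.mod_upper_bound k (2^e) He).
    unfold P. nia. }
  apply le_INR in H1, H2. rewrite mult_INR, pow_INR, INR2 in H1, H2.
  rewrite plus_INR in H2. simpl INR in H2. rewrite plus_INR in H2. simpl INR in H2.
  set (D := 2^e) in *. assert (HD : 0 < D) by (apply pow_lt; lra).
  assert (HN : 0 < 2^n) by (apply pow_lt; lra).
  assert (E1 : 2^(n + S e) = 2^n * (2 * D)) by (rewrite pow_add; simpl; reflexivity).
  assert (E2 : 2^(S (n + S e)) = 2 * (2^n * (2 * D))) by (rewrite <- E1; reflexivity).
  rewrite E1, E2, S_INR, plus_INR, mult_INR, INR2. simpl (INR 1).
  replace (2 ^ n * ((2 * INR k + 1) / (2 * (2 ^ n * (2 * D)))) - INR i)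
    with (((2 ^ n * (INR k / (2 ^ n * (2 * D))) - INR i) + (2 ^ n * ((INR k + 1) / (2 ^ n * (2 * D))) - INR i)) / 2)
    by (field; lra).
  apply s00_cell with (z := (Z.of_nat P - 2 * Z.of_nat i)%Z);
    rewrite ?minus_IZR, ?mult_IZR, <- ?INR_IZR_INZ.
  - replace (2 ^ n * (INR k / (2 ^ n * (2 * D))) - INR i) with (INR k / (2*D) - INR i) by (field; lra).
    pose proof (aux_div (INR P) (INR k) D HD ltac:(lra)). simpl (IZR 2). lra.
  - assert (0 <= / (2 ^ n * (2 * D))) by (apply Rlt_le, Rinv_0_lt_compat; nra).
    unfold Rdiv. nra.
  - replace (2 ^ n * ((INR k + 1) / (2 ^ n * (2 * D))) - INR i) with ((INR k + 1) / (2*D) - INR i) by (field; lra).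
    assert ((INR k + 1) / (2*D) <= (INR P + 1)/2).
    { apply Rle_div_l. nra. replace ((INR P + 1) / 2 * (2 * D)) with ((INR P + 1) * D) by field. lra. }
    simpl (IZR 2). lra.
Qed.

Lemma exR_plus a b : ex_series a -> ex_series b -> ex_series (fun n => a n + b n).
Proof. intros. apply (ex_series_plus (K:=R_AbsRing) (V:=R_NormedModule)); auto. Qed.
Lemma exR_scal c a : ex_series a -> ex_series (fun n => c * a n).
Proof. intros. apply (ex_series_scal (K:=R_AbsRing) (V:=R_NormedModule)); auto. Qed.
Lemma exR_minus a b : ex_series a -> ex_series b -> ex_series (fun n => a n - b n).
Proof. intros. apply (ex_series_minus (K:=R_AbsRing) (V:=R_NormedModule)); auto. Qed.

Lemma sum_comb f g h K : (forall i, f i + g i - 2 * h i = 0) ->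
  sum_f_R0 f K + sum_f_R0 g K - 2 * sum_f_R0 h K = 0.
Proof.
  intros H. induction K. simpl. apply H.
  rewrite !tech5. specialize (H (S K)). lra.
Qed.

Section Combo.
Variables (m k : nat).
Hypothesis Hk : (S k <= 2^m)%nat.
Let a := INR k / 2^m.
Let b := INR (S k) / 2^m.
Let c := INR (2*k+1) / 2^(S m).
Let d n := f_term a n + f_term b n - 2 * f_term c n.

Lemma d_low n : (n < m)%nat -> d n = 0.
Proof.
  intros Hn. unfold d, a, b, c, f_term, Defs.sigma.
  replace m with (n + S (m - n - 1))%nat by lia.
  rewrite <- (Rmult_0_r (/ (INR n + 1) ^ 2)).
  rewrite <- (sum_comb _ _ _ (2 ^ n - 1) (fun i => low_term n (m - n - 1) k i)).
  ring.
Qed.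

Lemma d_high n : (m < n)%nat -> d n = 0.
Proof.
  intros Hn. unfold d, a, b, c. rewrite !grid_zero by lia. ring.
Qed.

Lemma d_mid : d m = - 2 / (INR m + 1) ^ 2.
Proof.
  unfold d, a, b, c. rewrite !grid_zero by lia.
  unfold f_term, Defs.sigma.
  rewrite (sum_eq _ (fun i => sigma00 (INR k + /2 - INR i))).
  - rewrite half_sum. rewrite (proj2 (Nat.leb_le k (2^m-1))) by lia. field.
    pose proof (pos_INR m); lra.
  - intros i _. f_equal. rewrite plus_INR, mult_INR, INR2. simpl (INR 1). simpl pow. field.
    apply pow_nonzero; lra.
Qed.

Lemma combo : fFS a + fFS b - 2 * fFS c = - 2 / (INR m + 1) ^ 2.
Proof.
  assert (Hd : Series d = - 2 / (INR m + 1) ^ 2).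
  { assert (Ed : ex_series d).
    { unfold d. apply exR_minus. apply exR_plus; apply ex_f. apply exR_scal, ex_f. }
    rewrite (Series_incr_n_aux d m) by (intros; apply d_low; lia).
    rewrite Series_incr_1.
    2: { apply (ex_series_incr_n (K:=R_AbsRing) (V:=R_NormedModule)). exact Ed. }
    rewrite Nat.add_0_r, d_mid.
    rewrite (Series_ext _ (fun n => 0 * 0)).
    - rewrite (Series_scal_l 0 (fun _ => 0)). ring.
    - intros. rewrite d_high by lia. ring. }
  rewrite <- Hd. unfold d, fFS.
  rewrite Series_minus, Series_plus, Series_scal_l; try apply ex_f; try apply exR_plus; try apply exR_scal; try apply ex_f.
  ring.
Qed.
End Combo.

Lemma contra_bound m k x0 K : (S k <= 2^m)%nat ->
  Rabs (fFS (INR k / 2^m) - fFS x0) <= K ->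
  Rabs (fFS (INR (S k) / 2^m) - fFS x0) <= K ->
  Rabs (fFS (INR (2*k+1) / 2^(S m)) - fFS x0) <= K ->
  2 / (INR m + 1)^2 <= 4 * K.
Proof.
  intros Hk H1 H2 H3. pose proof (combo m k Hk) as E.
  set (v := 2 / (INR m + 1)^2).
  assert (Ev : - 2 / (INR m + 1) ^ 2 = - v) by (unfold v, Rdiv; ring).
  rewrite Ev in E. clearbody v.
  revert H1 H2 H3. unfold Rabs. repeat destruct (Rcase_abs _); lra.
Qed.

Lemma pow2_ge n : INR n <= 2 ^ n.
Proof.
  induction n. simpl; lra. rewrite S_INR. simpl.
  pose proof (pow_R1_Rle 2 n ltac:(lra)). lra.
Qed.

Lemma pick_nat r : exists N : nat, r < INR N.
Proof.
  destruct (Rlt_or_le r 0).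
  - exists 0%nat. simpl; lra.
  - destruct (archimed r) as [H1 H2]. exists (Z.to_nat (up r)).
    assert (0 < up r)%Z by (apply lt_IZR; lra).
    rewrite INR_IZR_INZ, Z2Nat.id by lia. lra.
Qed.

Lemma rpow_inv2 N a : Rpower (/ 2 ^ N) a = exp (- (a * (INR N * ln 2))).
Proof.
  unfold Rpower. rewrite ln_Rinv, ln_pow; try lra; try (apply pow_lt; lra).
  f_equal; ring.
Qed.

Lemma growth a M : 0 < a -> exists N0, forall N : nat, N0 <= INR N ->
  4 * (M * exp (- (a * (INR N * ln 2)))) < 2 / (INR (N + 2) + 1) ^ 2.
Proof.
  intros Ha.
  assert (Hl : 0 < ln 2) by (rewrite <- ln_1; apply ln_increasing; lra).
  set (t := a * ln 2). assert (Ht : 0 < t) by (unfold t; nra).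
  set (M' := Rmax M 0).
  assert (HM : M <= M' /\ 0 <= M') by (unfold M'; split; [apply Rmax_l|apply Rmax_r]).
  exists (Rmax 3 (216 * M' / (t^3) + 1)). intros N HN.
  set (x := INR N) in *.
  assert (Hx3 : 3 <= x) by (eapply Rle_trans; [apply Rmax_l|exact HN]).
  assert (Hx2 : 216 * M' / t^3 + 1 <= x) by (eapply Rle_trans; [apply Rmax_r|exact HN]).
  assert (Ht3 : 0 < t^3) by (apply pow_lt; lra).
  assert (HxM : 216 * M' <= t^3 * x).
  { apply Rmult_le_compat_l with (r := t^3) in Hx2; [|lra].
    replace (t^3 * (216 * M' / t^3 + 1)) with (216 * M' + t^3) in Hx2 by (field; lra). lra. }
  replace (a * (x * ln 2)) with (t * x) by (unfold t; ring).
  set (E := exp (t * x)).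
  assert (HE : (t * x / 3) ^ 3 < E).
  { unfold E. replace (t * x) with (t*x/3 + t*x/3 + t*x/3) at 2 by field.
    rewrite !exp_plus. assert (t * x / 3 <> 0) by nra.
    pose proof (exp_ineq1 _ H). assert (0 < t * x / 3) by nra.
    simpl. set (w := exp (t * x / 3)) in *. set (s := t * x / 3) in *.
    assert (s < w) by lra. assert (s * s < w * w) by nra. assert (s*s*s < w*w*w) by nra. nra. }
  assert (HEp : 0 < E) by apply exp_pos.
  rewrite exp_Ropp. fold E.
  rewrite plus_INR, INR2. fold x. replace (x + 2 + 1) with (x + 3) by ring.
  assert (Hc : 2 * M' * (x + 3) ^ 2 < E).
  { assert ((x+3)^2 <= 4 * x^2) by nra.
    assert (2 * M' * (x+3)^2 <= 2 * M' * (4 * x^2)) by (apply Rmult_le_compat_l; lra).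
    assert (8 * M' * x^2 * 27 <= t^3 * x^3).
    { replace (8 * M' * x^2 * 27) with ((216 * M') * x^2) by ring.
      replace (t^3 * x^3) with ((t^3 * x) * x^2) by ring. apply Rmult_le_compat_r; nra. }
    assert ((t * x / 3) ^ 3 = t^3 * x^3 / 27) by field. nra. }
  assert (HX : 0 < (x+3)^2) by nra.
  replace (4 * (M * / E)) with ((4 * M * (x+3)^2) * / (E * (x+3)^2)) by (field; lra).
  replace (2 / (x + 3) ^ 2) with ((2 * E) * / (E * (x+3)^2)) by (field; lra).
  apply Rmult_lt_compat_r. apply Rinv_0_lt_compat; nra. nra.
Qed.

Lemma hold_use x0 y a M L : 0 < a -> 0 < Rabs (y - x0) <= L ->
  Rabs (fFS y - fFS x0) / Rpower (Rabs (y - x0)) a <= M ->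
  Rabs (fFS y - fFS x0) <= M * Rpower L a.
Proof.
  intros Ha Hy H.
  set (P := Rpower (Rabs (y - x0)) a) in *.
  assert (HP : 0 < P) by (unfold P, Rpower; apply exp_pos).
  assert (H0 : 0 <= Rabs (fFS y - fFS x0) / P) by (apply Rdiv_le_0_compat; [apply Rabs_pos|lra]).
  assert (HM : 0 <= M) by lra.
  assert (HPL : P <= Rpower L a) by (apply Rle_Rpower_l; lra).
  replace (Rabs (fFS y - fFS x0)) with (Rabs (fFS y - fFS x0) / P * P) by (field; lra).
  apply Rle_trans with (M * P). apply Rmult_le_compat_r; lra.
  apply Rmult_le_compat_l; lra.
Qed.

Lemma pow_m N : 2 ^ (N + 2) = 2 ^ N * 4.
Proof. rewrite pow_add. simpl. ring. Qed.

Theorem mainTheorem4 : completely_non_Holder fFS.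
Proof.
  unfold completely_non_Holder.
  intros [x0 [al [Hal [[Hx [M [del [Hdel H]]]] | [Hx [M [del [Hdel H]]]]]]]].
  - set (eps := Rmin del (1 - x0)).
    assert (Heps : 0 < eps /\ eps <= del /\ eps <= 1 - x0).
    { unfold eps; repeat split; [apply Rmin_glb_lt; lra | apply Rmin_l | apply Rmin_r]. }
    destruct (growth al M Hal) as [N0 HN0].
    destruct (pick_nat (Rmax N0 (/ eps))) as [N HN].
    assert (HN1 : N0 <= INR N) by (pose proof (Rmax_l N0 (/eps)); lra).
    assert (HN2 : / eps < INR N) by (pose proof (Rmax_r N0 (/eps)); lra).
    assert (Hie : 0 < / eps) by (apply Rinv_0_lt_compat; lra).
    set (L := / 2 ^ N).
    assert (HL : 0 < L /\ L < eps).
    { unfold L. split. apply Rinv_0_lt_compat, pow_lt; lra.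
      pose proof (pow2_ge N). rewrite <- (Rinv_inv eps).
      apply Rinv_lt_contravar. apply Rmult_lt_0_compat; lra. lra. }
    set (m := (N + 2)%nat).
    assert (Hm : 2 ^ m = 2 ^ N * 4) by apply pow_m.
    assert (H2N : 0 < 2 ^ N) by (apply pow_lt; lra).
    assert (HLm : L = 4 / 2 ^ m) by (unfold L; rewrite Hm; field; lra).
    set (u := up (x0 * 2 ^ m)).
    destruct (archimed (x0 * 2 ^ m)) as [Hu1 Hu2]. fold u in Hu1, Hu2.
    assert (Hu0 : (0 < u)%Z) by (apply lt_IZR; nra).
    set (k := Z.to_nat u).
    assert (Hk : INR k = IZR u) by (unfold k; rewrite INR_IZR_INZ, Z2Nat.id by lia; reflexivity).
    assert (Ea : INR k / 2 ^ m = IZR u / 2 ^ m) by (rewrite Hk; reflexivity).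
    assert (Eb : INR (S k) / 2 ^ m = (IZR u + 1) / 2 ^ m) by (rewrite S_INR, Hk; reflexivity).
    assert (Ec : INR (2*k+1) / 2 ^ (S m) = (IZR u + /2) / 2 ^ m).
    { rewrite plus_INR, mult_INR, INR2, Hk. simpl (INR 1). simpl pow. field. lra. }
    assert (Ha1 : x0 < IZR u / 2 ^ m) by (apply Rmult_lt_reg_r with (2^m); [lra|]; field_simplify; lra).
    assert (Hb1 : (IZR u + 1) / 2 ^ m <= x0 + L / 2) by (rewrite HLm; apply Rmult_le_reg_r with (2^m); [lra|]; field_simplify; lra).
    assert (Hord : IZR u / 2^m < (IZR u + /2) / 2^m < (IZR u + 1) / 2^m).
    { split; apply Rmult_lt_reg_r with (2^m); try lra; field_simplify; lra. }
    assert (Hsk : (S k <= 2 ^ m)%nat).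
    { apply INR_le. rewrite pow_INR, INR2, S_INR, Hk.
      apply Rmult_le_reg_r with (/ 2^m). apply Rinv_0_lt_compat; lra.
      rewrite Rinv_r by lra. fold ((IZR u + 1) / 2 ^ m). lra. }
    assert (Huse : forall y, x0 < y <= x0 + L / 2 -> Rabs (fFS y - fFS x0) <= M * Rpower L al).
    { intros y Hy. apply hold_use with (a := al); [lra| |].
      rewrite Rabs_pos_eq by lra. lra. apply H; lra. }
    pose proof (contra_bound m k x0 (M * Rpower L al) Hsk) as C.
    rewrite Ea, Eb, Ec in C.
    pose proof (Huse ((IZR u)/2^m) ltac:(lra)). pose proof (Huse ((IZR u + 1)/2^m) ltac:(lra)). pose proof (Huse ((IZR u + /2)/2^m) ltac:(lra)).
    specialize (C H0 H1 H2).
    specialize (HN0 N HN1). unfold L in C. rewrite rpow_inv2 in C. unfold m in C. lra.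
  - set (eps := Rmin del x0).
    assert (Heps : 0 < eps /\ eps <= del /\ eps <= x0).
    { unfold eps; repeat split; [apply Rmin_glb_lt; lra | apply Rmin_l | apply Rmin_r]. }
    destruct (growth al M Hal) as [N0 HN0].
    destruct (pick_nat (Rmax N0 (/ eps))) as [N HN].
    assert (HN1 : N0 <= INR N) by (pose proof (Rmax_l N0 (/eps)); lra).
    assert (HN2 : / eps < INR N) by (pose proof (Rmax_r N0 (/eps)); lra).
    assert (Hie : 0 < / eps) by (apply Rinv_0_lt_compat; lra).
    set (L := / 2 ^ N).
    assert (HL : 0 < L /\ L < eps).
    { unfold L. split. apply Rinv_0_lt_compat, pow_lt; lra.
      pose proof (pow2_ge N). rewrite <- (Rinv_inv eps).
      apply Rinv_lt_contravar. apply Rmult_lt_0_compat; lra. lra. }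
    set (m := (N + 2)%nat).
    assert (Hm : 2 ^ m = 2 ^ N * 4) by apply pow_m.
    assert (H2N : 0 < 2 ^ N) by (apply pow_lt; lra).
    assert (HLm : L = 4 / 2 ^ m) by (unfold L; rewrite Hm; field; lra).
    assert (HLx : 4 < x0 * 2 ^ m).
    { assert (L * 2^m = 4) by (rewrite HLm; field; lra). nra. }
    set (u := up (x0 * 2 ^ m)).
    destruct (archimed (x0 * 2 ^ m)) as [Hu1 Hu2]. fold u in Hu1, Hu2.
    assert (Hu0 : (3 < u)%Z) by (apply lt_IZR; nra).
    set (k := Z.to_nat (u - 3)).
    assert (Hk : INR k = IZR u - 3) by (unfold k; rewrite INR_IZR_INZ, Z2Nat.id by lia; rewrite minus_IZR; reflexivity).
    assert (Ea : INR k / 2 ^ m = (IZR u - 3) / 2 ^ m) by (rewrite Hk; reflexivity).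
    assert (Eb : INR (S k) / 2 ^ m = (IZR u - 2) / 2 ^ m) by (rewrite S_INR, Hk; f_equal; ring).
    assert (Ec : INR (2*k+1) / 2 ^ (S m) = (IZR u - 5/2) / 2 ^ m).
    { rewrite plus_INR, mult_INR, INR2, Hk. simpl (INR 1). simpl pow. field. lra. }
    assert (Ha1 : x0 - L < (IZR u - 3) / 2 ^ m) by (rewrite HLm; apply Rmult_lt_reg_r with (2^m); [lra|]; field_simplify; lra).
    assert (Hb1 : (IZR u - 2) / 2 ^ m < x0) by (apply Rmult_lt_reg_r with (2^m); [lra|]; field_simplify; lra).
    assert (Hord : (IZR u - 3) / 2^m < (IZR u - 5/2) / 2^m < (IZR u - 2) / 2^m).
    { split; apply Rmult_lt_reg_r with (2^m); try lra; field_simplify; lra. }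
    assert (Hsk : (S k <= 2 ^ m)%nat).
    { apply INR_le. rewrite pow_INR, INR2, S_INR, Hk.
      apply Rmult_le_reg_r with (/ 2^m). apply Rinv_0_lt_compat; lra.
      rewrite Rinv_r by lra. replace ((IZR u - 3 + 1) * / 2 ^ m) with ((IZR u - 2) / 2 ^ m) by (unfold Rdiv; ring). lra. }
    assert (Huse : forall y, x0 - L < y < x0 -> Rabs (fFS y - fFS x0) <= M * Rpower L al).
    { intros y Hy. apply hold_use with (a := al); [lra| |].
      rewrite Rabs_left by lra. lra. apply H; lra. }
    pose proof (contra_bound m k x0 (M * Rpower L al) Hsk) as C.
    rewrite Ea, Eb, Ec in C.
    pose proof (Huse ((IZR u - 3)/2^m) ltac:(lra)). pose proof (Huse ((IZR u - 2)/2^m) ltac:(lra)). pose proof (Huse ((IZR u - 5/2)/2^m) ltac:(lra)).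
    specialize (C H0 H1 H2).
    specialize (HN0 N HN1). unfold L in C. rewrite rpow_inv2 in C. unfold m in C. lra.
Qed.
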